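(* Let $H=(U,(A_1,\dots,A_m))$ be a harmonic set system with $|U|<m(m-2)$ and $m\ge 51$. Then $H_{\{1,3,5\},\{7,9,11\}}=\emptyset$.
   Context: For $I_1,I_2\subseteq[m]$, $H_{I_1,I_2}=\bigcap_{i\in I_1}A_i\cap\bigcap_{i\in I_2}(U\setminus A_i)$ (empty intersection $=U$), $H_I=H_{I,\emptyset}$. The run decomposition of a finite set $I$ of positive integers is the partition of sizes, in nonincreasing order, of the maximal runs of consecutive integers in $I$. $H$ is harmonic if $|H_I|=|H_J|$ whenever $I,J\subseteq[m]$ have the same run decomposition. *)

(* Defs.v *)
From mathcomp Require Import all_boot.
Set Implicit Arguments. Unset Strict Implicit. Unset Printing Implicit Defensive.

(* A set system H = (U, (A_1,...,A_m)): the ground set U is the finite type U,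
   and A : nat -> {set U} gives A_i for i = 1..m (values at other i are irrelevant).
   Subsets of [m] = {1,...,m} are sets I : {set 'I_m.+1} with 0 \notin I. *)

Definition Hsys (U : finType) (m : nat) (A : nat -> {set U})
  (I1 I2 : {set 'I_m.+1}) : {set U} :=
  (\bigcap_(i in I1) A i) :&: (\bigcap_(i in I2) ~: A i).

Definition HI (U : finType) (m : nat) (A : nat -> {set U}) (I : {set 'I_m.+1})
  : {set U} := Hsys A I set0.

Fixpoint runs_from (last len : nat) (s : seq nat) : seq nat :=
  match s with
  | [::] => [:: len]
  | y :: t => if y == last.+1 then runs_from y len.+1 t
              else len :: runs_from y 1 t
  end.

Definition runs (s : seq nat) : seq nat :=
  match s with
  | [::] => [::]
  | x :: t => runs_from x 1 t
  end.

Definition run_decomp (n : nat) (I : {set 'I_n}) : seq nat :=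
  sort geq (runs (sort leq [seq val i | i in I])).

Definition subset_m (m : nat) (I : {set 'I_m.+1}) : bool := ord0 \notin I.

Definition harmonic (U : finType) (m : nat) (A : nat -> {set U}) : Prop :=
  forall I J : {set 'I_m.+1}, subset_m I -> subset_m J ->
    run_decomp I = run_decomp J -> #|HI A I| = #|HI A J|.

(* Main.v *)
Require Import Defs.
From mathcomp Require Import all_boot.
From mathcomp Require Import zify.

Lemma runs_from_odd s l len : odd l -> all odd s ->
  runs_from l len s = len :: nseq (size s) 1.
Proof.
elim: s l len => [|y t IH] l len //= ol /andP[oy ot].
have -> : (y == l.+1) = false.
  by apply/negbTE; apply/eqP => E; move: oy; rewrite E /= ol.
by rewrite IH.
Qed.

Lemma runs_odd s : all odd s -> runs s = nseq (size s) 1.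
Proof. by case: s => [|x t] //= /andP[ox ot]; rewrite runs_from_odd. Qed.

Lemma run_decomp_odd m (I : {set 'I_m.+1}) :
  (forall i, i \in I -> odd i) -> run_decomp I = sort geq (nseq #|I| 1).
Proof.
move=> H; rewrite /run_decomp runs_odd ?size_sort ?size_map -?cardE //.
rewrite all_sort; apply/allP => x /mapP [i]; rewrite mem_enum => /H oi ->. done.
Qed.

Lemma Hsys_addQ (U : finType) m (A : nat -> {set U}) P Q (q : 'I_m.+1) :
  Hsys A P (q |: Q) = Hsys A P Q :\: A q.
Proof.
rewrite /Hsys bigcap_setU big_set1 setDE; apply/setP => x.
by rewrite !inE; case: (x \in A q); rewrite /= ?andbT ?andbF.
Qed.

Lemma Hsys_addP (U : finType) m (A : nat -> {set U}) P Q (q : 'I_m.+1) :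
  Hsys A (q |: P) Q = Hsys A P Q :&: A q.
Proof.
rewrite /Hsys bigcap_setU big_set1; apply/setP => x.
by rewrite !inE; case: (x \in A q); rewrite /= ?andbT ?andbF.
Qed.

Definition good {m} (P Q : {set 'I_m.+1}) :=
  (forall i, i \in P :|: Q -> odd i) /\ (forall i, i \in P -> i \notin Q).

Lemma key (U : finType) m (A : nat -> {set U}) : harmonic m A -> forall (n : nat) (P Q P' Q' : {set 'I_m.+1}),
  good P Q -> good P' Q' -> #|P| = #|P'| -> #|Q| = n -> #|Q'| = n ->
  #|Hsys A P Q| = #|Hsys A P' Q'|.
Proof.
move=> hA; elim=> [|n IH] P Q P' Q' [oPQ dPQ] [oPQ' dPQ'] eP eQ eQ'.
  move/eqP: eQ; rewrite cards_eq0 => /eqP ->.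
  move/eqP: eQ'; rewrite cards_eq0 => /eqP ->.
  have oP : forall i, i \in P -> odd i by move=> i iP; apply: oPQ; rewrite inE iP.
  have oP' : forall i, i \in P' -> odd i by move=> i iP; apply: oPQ'; rewrite inE iP.
  apply: hA.
  - by apply/negP => /oP.
  - by apply/negP => /oP'.
  by rewrite !run_decomp_odd // eP.
have [q qQ] : exists q, q \in Q by apply/card_gt0P; rewrite eQ.
have [q' qQ'] : exists q, q \in Q' by apply/card_gt0P; rewrite eQ'.
have EQ := setD1K qQ; have EQ' := setD1K qQ'.
set Q0 := Q :\ q in EQ *; set Q0' := Q' :\ q' in EQ' *.
have cQ0 : #|Q0| = n by move: eQ; rewrite -EQ cardsU1 !inE eqxx /=; case.
have cQ0' : #|Q0'| = n by move: eQ'; rewrite -EQ' cardsU1 !inE eqxx /=; case.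
have h1 := cardsID (A q) (Hsys A P Q0).
have h2 := cardsID (A q') (Hsys A P' Q0').
rewrite -Hsys_addP -Hsys_addQ EQ in h1.
rewrite -Hsys_addP -Hsys_addQ EQ' in h2.
have e1 : #|Hsys A P Q0| = #|Hsys A P' Q0'|.
  apply: (IH _ _ _ _ _ _ eP cQ0 cQ0'); split.
  - by move=> i; rewrite !inE => /orP[] H; apply: oPQ; rewrite !inE ?H //; move: H => /andP[_ ->]; rewrite orbT.
  - by move=> i /dPQ; rewrite !inE; apply: contra => /andP[].
  - by move=> i; rewrite !inE => /orP[] H; apply: oPQ'; rewrite !inE ?H //; move: H => /andP[_ ->]; rewrite orbT.
  - by move=> i /dPQ'; rewrite !inE; apply: contra => /andP[].
have e2 : #|Hsys A (q |: P) Q0| = #|Hsys A (q' |: P') Q0'|.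
  apply: (IH _ _ _ _ _ _ _ cQ0 cQ0'); [split|split|].
  - move=> i; rewrite !inE => /orP[/orP[/eqP->|H]|/andP[_ H]]; apply: oPQ; rewrite !inE ?H ?qQ ?orbT //.
  - move=> i; rewrite !inE => /orP[/eqP->|/dPQ H]; first by rewrite eqxx.
    by apply/negP => /andP[_]; apply/negP.
  - move=> i; rewrite !inE => /orP[/orP[/eqP->|H]|/andP[_ H]]; apply: oPQ'; rewrite !inE ?H ?qQ' ?orbT //.
  - move=> i; rewrite !inE => /orP[/eqP->|/dPQ' H]; first by rewrite eqxx.
    by apply/negP => /andP[_]; apply/negP.
  have nqP : q \notin P by apply/negP => /dPQ; rewrite qQ.
  have nqP' : q' \notin P' by apply/negP => /dPQ'; rewrite qQ'.
  by rewrite !cardsU1 nqP nqP' eP.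
by move: h1; rewrite e1 e2 -h2 => /addnI.
Qed.

Lemma bin_step M k : k.*2.+1 <= M -> 'C(M, k) <= 'C(M, k.+1).
Proof.
move=> h; have e := mul_bin_left M k.
have : k.+1 * 'C(M, k) <= k.+1 * 'C(M, k.+1).
  rewrite e leq_mul2r; apply/orP; right; lia.
by rewrite leq_mul2l.
Qed.

Lemma bin_half M k : 3 <= k -> k.*2 <= M -> 'C(M, 3) <= 'C(M, k).
Proof.
elim: k => [|k IH] // h1 h2.
have [->|k3] := eqVneq k 2; first by [].
apply: (leq_trans _ (bin_step M k _)); last lia.
apply: IH; lia.
Qed.

Lemma bin_mid M s : 3 <= s -> s + 3 <= M -> 'C(M, 3) <= 'C(M, s).
Proof.
move=> h1 h2; have [h|h] := leqP s.*2 M; first exact: bin_half.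
rewrite -(bin_sub (n:=M) (m:=s)); last lia.
apply: (bin_half M (M - s)); lia.
Qed.

Lemma bin3E M : 'C(M, 3) * 6 = M * (M - 1) * (M - 2).
Proof.
have := bin_ffact M 3; rewrite !ffactnS ffactn0 => ->.
rewrite /=; case: M => [|[|[|M]]] //=; lia.
Qed.

Lemma final_arith m M : 51 <= m -> m.+1./2 <= M -> m * (m - 2) <= 'C(M, 3).
Proof.
move=> hm hM; apply: leq_trans (leq_bin2l _ hM).
set K := m.+1./2.
have : m.+1 = odd m.+1 + K.*2 by rewrite odd_double_half.
rewrite -(leq_pmul2r (isT : 0 < 6)) bin3E.
case: (odd m) => /= e; have K26 : 26 <= K by lia.
all: have -> : K = (K - 26) + 26 by lia.
all: nia.
Qed.

Theorem proposition4p20 (U : finType) (m : nat) (A : nat -> {set U}) :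
  harmonic m A -> #|U| < m * (m - 2) -> 51 <= m ->
  Hsys A ([set inord 1; inord 3; inord 5] : {set 'I_m.+1})
         [set inord 7; inord 9; inord 11] = set0.
Proof.
move=> hA hU hm.
apply/setP => x; rewrite in_set0; apply/negP => Hx.
have iK : forall k, k <= m -> nat_of_ord (inord k : 'I_m.+1) = k by move=> k hk; rewrite inordK.
set O : {set 'I_m.+1} := [set i : 'I_m.+1 | odd i].
set S : {set 'I_m.+1} := [set i in O | x \in A (nat_of_ord i)].
move: Hx; rewrite /Hsys inE => /andP[/bigcapP HP /bigcapP HQ].
have inS : forall k, k <= m -> odd k -> (inord k : 'I_m.+1) \in [set inord 1; inord 3; inord 5] -> (inord k : 'I_m.+1) \in S.
  move=> k hk ok hin; rewrite !inE iK // ok /=.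
  by have := HP _ hin; rewrite iK.
have notS : forall k, k <= m -> odd k -> (inord k : 'I_m.+1) \in [set inord 7; inord 9; inord 11] -> (inord k : 'I_m.+1) \in O :\: S.
  move=> k hk ok hin; rewrite !inE iK // ok /= andbT.
  by have := HQ _ hin; rewrite !inE iK.
have ne : forall a b, a <= m -> b <= m -> a != b -> (inord a : 'I_m.+1) != inord b.
  by move=> a b ha hb; apply: contra => /eqP /(congr1 (@nat_of_ord _)); rewrite !iK // => ->.
have c3 : forall a b c, a <= m -> b <= m -> c <= m -> a != b -> a != c -> b != c ->
    #|([set inord a; inord b; inord c] : {set 'I_m.+1})| = 3.
  move=> a b c ha hb hc ab ac bc.
  by rewrite -setUA !cardsU1 cards1 !inE (negbTE (ne _ _ ha hb ab)) (negbTE (ne _ _ ha hc ac)) (negbTE (ne _ _ hb hc bc)).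
have s3 : 3 <= #|S|.
  rewrite -(c3 1 3 5) //; try lia.
  apply: subset_leq_card; apply/subsetP => i hi.
  case/setUP: hi => [/setUP[]|] /set1P -> ; apply: inS; rewrite ?inE ?eqxx ?orbT //; lia.
have Os : #|S| + 3 <= #|O|.
  have SO : S \subset O by apply/subsetP => i; rewrite inE => /andP[].
  have : 3 <= #|O :\: S|.
    rewrite -(c3 7 9 11) //; try lia.
    apply: subset_leq_card; apply/subsetP => i hi.
    case/setUP: hi => [/setUP[]|] /set1P -> ; apply: notS; rewrite ?inE ?eqxx ?orbT //; lia.
  rewrite cardsD (setIidPr SO); lia.
have OK : m.+1./2 <= #|O|.
  pose f := fun j : 'I_(m.+1./2) => (inord (j.*2.+1) : 'I_m.+1).
  have hf : forall j : 'I_(m.+1./2), j.*2.+1 <= m.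
    move=> j; have := ltn_ord j; have := odd_double_half m.+1; lia.
  have finj : injective f.
    move=> j1 j2 /(congr1 (@nat_of_ord _)); rewrite /f !iK ?hf // => e; apply: ord_inj; lia.
  rewrite -{1}(card_ord (m.+1./2)) -cardsT -(card_imset _ finj).
  apply: subset_leq_card; apply/subsetP => i /imsetP [j _ ->].
  by rewrite inE /f iK ?hf //= odd_double.
have good_of : forall S' : {set 'I_m.+1}, S' \subset O -> good S' (O :\: S').
  move=> S' SO; split.
  - move=> i; rewrite !inE => /orP[/(subsetP SO)|/andP[_]]; rewrite ?inE //.
  - by move=> i iS; rewrite !inE iS.
have SO : S \subset O by apply/subsetP => i; rewrite inE => /andP[].
have xS : x \in Hsys A S (O :\: S).
  rewrite /Hsys inE; apply/andP; split; apply/bigcapP => i; rewrite !inE.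
  - by case/andP.
  - by case/andP => H oi; rewrite oi in H.
set F := [set S' : {set 'I_m.+1} | S' \subset O & #|S'| == #|S|].
have cF : #|F| = 'C(#|O|, #|S|) by rewrite cards_draws.
pose g := fun y : U => [set i in O | y \in A (nat_of_ord i)].
have FS : F \subset g @: [set: U].
  apply/subsetP => S'; rewrite inE => /andP[S'O /eqP cS'].
  have : 0 < #|Hsys A S' (O :\: S')|.
    rewrite (@key U m A hA _ _ _ _ _ (good_of _ S'O) (good_of _ SO) cS' (erefl _)).
      by apply/card_gt0P; exists x.
    by rewrite !cardsD (setIidPr S'O) (setIidPr SO) cS'.
  case/card_gt0P => y; rewrite /Hsys inE => /andP[/bigcapP yP /bigcapP yQ].
  apply/imsetP; exists y; first by rewrite inE.
  apply/setP => i; rewrite !inE.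
  case iS: (i \in S').
    have := yP _ iS; have := subsetP S'O _ iS; rewrite inE => -> -> //.
  case oi: (odd i) => //=.
  have : i \in O :\: S' by rewrite !inE iS oi.
  by move/yQ; rewrite inE => /negbTE ->.
have : #|F| <= #|U|.
  apply: (leq_trans (subset_leq_card FS)).
  by rewrite -cardsT leq_imset_card.
rewrite cF => hF.
have := @final_arith m _ hm OK.
have := @bin_mid _ _ s3 Os.
lia.
Qed.
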